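(* Let $n=2$ and let $t\mapsto (q(t),p(t))$ be a solution of $\dot q_i=\partial H/\partial p_i$, $\dot p_i=-\partial H/\partial q_i$, $H=\frac12\sum_{i,j=1}^2p_ip_je^{-|q_i-q_j|}$, with $q_1(0)>q_2(0)$, normalized so that $p_1^2+p_2^2+2p_1p_2e^{-|q_1-q_2|}=1$. If $|p_1+p_2|<1$ and $p_1-p_2<0$ at $t=0$, then $q_1(t)-q_2(t)\to0$ in finite time (the trajectory reaches the singular set $\{q_1=q_2\}$ in finite time). If $|p_1+p_2|=1$ and $p_1-p_2<0$ at $t=0$, then $q_1(t)-q_2(t)\to0$ as $t\to\infty$ (the singular set is approached only asymptotically).
   Context: The quantity $p_1+p_2$ is constant along solutions. *)

(* Defs.v *)
From Stdlib Require Import Reals.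
From Coquelicot Require Import Coquelicot.
Open Scope R_scope.

Definition Ham (q1 q2 p1 p2 : R) : R :=
  / 2 * ( p1 * p1 * exp (- Rabs (q1 - q1)) + p1 * p2 * exp (- Rabs (q1 - q2))
        + p2 * p1 * exp (- Rabs (q2 - q1)) + p2 * p2 * exp (- Rabs (q2 - q2))).

(* (q1,q2,p1,p2) is a solution of Hamilton's equations
     dq_i/dt = dH/dp_i,  dp_i/dt = - dH/dq_i
   on the time interval [0, T) (T possibly +oo), staying in the region
   q1 > q2 (where H is smooth).  The equations hold on (0, T), and the
   trajectory is right-continuous at the initial time 0. *)
Definition is_solution (q1 q2 p1 p2 : R -> R) (T : Rbar) : Prop :=
  (forall t : R, 0 < t -> Rbar_lt t T ->
     is_derive q1 t (Derive (fun x => Ham (q1 t) (q2 t) x (p2 t)) (p1 t)) /\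
     is_derive q2 t (Derive (fun x => Ham (q1 t) (q2 t) (p1 t) x) (p2 t)) /\
     is_derive p1 t (- Derive (fun x => Ham x (q2 t) (p1 t) (p2 t)) (q1 t)) /\
     is_derive p2 t (- Derive (fun x => Ham (q1 t) x (p1 t) (p2 t)) (q2 t))) /\
  filterlim q1 (at_right 0) (locally (q1 0)) /\
  filterlim q2 (at_right 0) (locally (q2 0)) /\
  filterlim p1 (at_right 0) (locally (p1 0)) /\
  filterlim p2 (at_right 0) (locally (p2 0)) /\
  (forall t : R, 0 <= t -> Rbar_lt t T -> q2 t < q1 t).

Definition has_init (q1 q2 p1 p2 : R -> R) (a1 a2 b1 b2 : R) : Prop :=
  q1 0 = a1 /\ q2 0 = a2 /\ p1 0 = b1 /\ p2 0 = b2.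

(* Main.v *)
Require Import Defs.
From Stdlib Require Import Reals Lra.
From Coquelicot Require Import Coquelicot.
Open Scope R_scope.

Lemma lim_plus {T} (F : (T -> Prop) -> Prop) {FF : Filter F} (f g : T -> R) a b :
  filterlim f F (locally a) -> filterlim g F (locally b) ->
  filterlim (fun x => f x + g x) F (locally (a + b)).
Proof.
  intros Hf Hg. eapply filterlim_comp_2; [exact Hf|exact Hg|].
  exact (@filterlim_plus R_AbsRing R_NormedModule a b).
Qed.

Lemma lim_mult {T} (F : (T -> Prop) -> Prop) {FF : Filter F} (f g : T -> R) a b :
  filterlim f F (locally a) -> filterlim g F (locally b) ->
  filterlim (fun x => f x * g x) F (locally (a * b)).
Proof.
  intros Hf Hg. eapply filterlim_comp_2; [exact Hf|exact Hg|].
  exact (@filterlim_mult R_AbsRing a b).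
Qed.

Lemma lim_comp1 {T} (F : (T -> Prop) -> Prop) {FF : Filter F} (f : T -> R) (g : R -> R) a :
  filterlim f F (locally a) -> ex_derive g a ->
  filterlim (fun x => g (f x)) F (locally (g a)).
Proof.
  intros Hf Hg. eapply filterlim_comp; [exact Hf|].
  exact (ex_derive_continuous g a Hg).
Qed.

Lemma mono (f : R -> R) (T : Rbar) :
 (forall t, 0 < t -> Rbar_lt t T -> exists d, is_derive f t d /\ d <= 0) ->
 filterlim f (at_right 0) (locally (f 0)) ->
 forall t, 0 <= t -> Rbar_lt t T -> f t <= f 0.
Proof.
  intros Hd Hc t Ht0 HtT.
  destruct (Req_dec t 0) as [->|Hn]; [lra|].
  assert (Hpos: 0<t) by lra.
  assert (HT : forall x, 0 < x <= t -> Rbar_lt x T).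
  { intros x Hx. apply Rbar_le_lt_trans with t; [simpl; lra|exact HtT]. }
  assert (Hs : forall s, 0 < s <= t -> f t <= f s).
  { intros s Hs.
    destruct (Req_dec s t) as [->|Hst]; [lra|].
    destruct (MVT_gen f s t (Derive f)) as [c [Hc1 Hc2]].
    - intros x Hx. rewrite Rmin_left, Rmax_right in Hx by lra.
      destruct (Hd x) as [d [Hd1 _]]; [lra|apply HT; lra|].
      rewrite (is_derive_unique _ _ _ Hd1). exact Hd1.
    - intros x Hx. rewrite Rmin_left, Rmax_right in Hx by lra.
      destruct (Hd x) as [d [Hd1 _]]; [lra|apply HT; lra|].
      apply continuity_pt_filterlim. apply (@ex_derive_continuous R_AbsRing R_NormedModule). exists d; exact Hd1.
    - rewrite Rmin_left, Rmax_right in Hc1 by lra.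
      destruct (Hd c) as [d [Hd1 Hd2]]; [lra|apply HT; lra|].
      rewrite (is_derive_unique _ _ _ Hd1) in Hc2.
      assert (d * (t - s) <= 0).
      { apply Rmult_le_0_r; lra. }
      lra. }
  apply Rnot_lt_le; intro Hlt.
  assert (He : 0 < f t - f 0) by lra.
  destruct (Hc _ (locally_ball (f 0) (mkposreal _ He))) as [d Hd'].
  set (y := Rmin (d/2) t).
  assert (Hy0 : 0 < y).
  { unfold y. apply Rmin_glb_lt; [destruct d; simpl; lra|lra]. }
  assert (Hyd : y <= d/2) by apply Rmin_l.
  assert (Hyt : y <= t) by apply Rmin_r.
  assert (Hb : ball 0 d y).
  { change (Rabs (y - 0) < d). rewrite Rminus_0_r, Rabs_pos_eq by lra.
    destruct d; simpl in *; lra. }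
  specialize (Hd' y Hb Hy0).
  change (Rabs (f y - f 0) < f t - f 0) in Hd'.
  apply Rabs_def2 in Hd'.
  specialize (Hs y (conj Hy0 Hyt)). lra.
Qed.

Lemma const (f : R -> R) (T : Rbar) :
 (forall t, 0 < t -> Rbar_lt t T -> is_derive f t 0) ->
 filterlim f (at_right 0) (locally (f 0)) ->
 forall t, 0 <= t -> Rbar_lt t T -> f t = f 0.
Proof.
  intros Hd Hc t H0 H1.
  apply Rle_antisym.
  - apply (mono f T); auto. intros s Hs1 Hs2. exists 0. split; [auto|lra].
  - assert (- f t <= - f 0); [|lra].
    apply (mono (fun s => - f s) T); auto.
    + intros s Hs1 Hs2. exists (-0). split; [|lra].
      apply (is_derive_opp f s 0). auto.
    + apply (lim_comp1 _ f Ropp). auto. auto_derive. auto.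
Qed.

Lemma Ham_simpl q1 q2 p1 p2 :
  Ham q1 q2 p1 p2 = /2 * (p1*p1 + 2*p1*p2*exp(-Rabs(q1-q2)) + p2*p2).
Proof.
  unfold Ham. rewrite !Rminus_diag, Rabs_R0, Ropp_0, exp_0, (Rabs_minus_sym q2 q1). ring.
Qed.

Lemma DH_p1 q1 q2 p1 p2 : Derive (fun x => Ham q1 q2 x p2) p1 = p1 + p2 * exp(-Rabs(q1-q2)).
Proof.
  rewrite (Derive_ext _ (fun x => /2 * (x*x + 2*x*p2*exp(-Rabs(q1-q2)) + p2*p2)))
    by (intro; apply Ham_simpl).
  apply is_derive_unique. auto_derive; auto. field.
Qed.

Lemma DH_p2 q1 q2 p1 p2 : Derive (fun x => Ham q1 q2 p1 x) p2 = p2 + p1 * exp(-Rabs(q1-q2)).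
Proof.
  rewrite (Derive_ext _ (fun x => /2 * (p1*p1 + 2*p1*x*exp(-Rabs(q1-q2)) + x*x)))
    by (intro; apply Ham_simpl).
  apply is_derive_unique. auto_derive; auto. field.
Qed.

Lemma DH_q1 q1 q2 p1 p2 : q2 < q1 ->
  Derive (fun x => Ham x q2 p1 p2) q1 = - (p1 * p2 * exp(-(q1-q2))).
Proof.
  intro H.
  rewrite (Derive_ext _ (fun x => /2 * (p1*p1 + 2*p1*p2*exp(-Rabs(x-q2)) + p2*p2)))
    by (intro; apply Ham_simpl).
  apply is_derive_unique.
  apply is_derive_ext_loc with (fun x => /2 * (p1*p1 + 2*p1*p2*exp(-(x-q2)) + p2*p2)).
  - assert (He : 0 < q1 - q2) by lra.
    exists (mkposreal _ He). intros y Hy.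
    change (Rabs (y - q1) < q1 - q2) in Hy. apply Rabs_def2 in Hy.
    rewrite (Rabs_pos_eq (y - q2)) by lra. reflexivity.
  - auto_derive; auto. unfold Rminus; field.
Qed.

Lemma DH_q2 q1 q2 p1 p2 : q2 < q1 ->
  Derive (fun x => Ham q1 x p1 p2) q2 = p1 * p2 * exp(-(q1-q2)).
Proof.
  intro H.
  rewrite (Derive_ext _ (fun x => /2 * (p1*p1 + 2*p1*p2*exp(-Rabs(q1-x)) + p2*p2)))
    by (intro; apply Ham_simpl).
  apply is_derive_unique.
  apply is_derive_ext_loc with (fun x => /2 * (p1*p1 + 2*p1*p2*exp(-(q1-x)) + p2*p2)).
  - assert (He : 0 < q1 - q2) by lra.
    exists (mkposreal _ He). intros y Hy.
    change (Rabs (y - q2) < q1 - q2) in Hy. apply Rabs_def2 in Hy.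
    rewrite (Rabs_pos_eq (q1 - y)) by lra. reflexivity.
  - auto_derive; auto. unfold Rminus; field.
Qed.

Lemma sol_der q1 q2 p1 p2 T : is_solution q1 q2 p1 p2 T -> forall t, 0 < t -> Rbar_lt t T ->
  is_derive q1 t (p1 t + p2 t * exp(-(q1 t - q2 t))) /\
  is_derive q2 t (p2 t + p1 t * exp(-(q1 t - q2 t))) /\
  is_derive p1 t (p1 t * p2 t * exp(-(q1 t - q2 t))) /\
  is_derive p2 t (- (p1 t * p2 t * exp(-(q1 t - q2 t)))).
Proof.
  intros [Hd [_ [_ [_ [_ Hlt]]]]] t H0 H1.
  specialize (Hlt t (Rlt_le _ _ H0) H1).
  destruct (Hd t H0 H1) as [A [B [C D]]].
  rewrite DH_p1, Rabs_pos_eq in A by lra.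
  rewrite DH_p2, Rabs_pos_eq in B by lra.
  rewrite DH_q1, Ropp_involutive in C by lra.
  rewrite DH_q2 in D by lra.
  auto.
Qed.
Definition rr mu r0 t := r0 * exp (-(mu*t)).
Definition Ef P mu r := (mu*mu*(r+1)*(r+1) - P*P*(r-1)*(r-1)) / (4*mu*mu*r).
Definition Lf P mu r := ln ((mu*(r+1)+P*(r-1))/(mu*(r+1)-P*(r-1))).
Definition uf mu r := -mu*(r+1)/(r-1).
Definition Sf P mu r0 C t := C + P*t - Lf P mu (rr mu r0 t).
Definition q1f P mu r0 C t := (Sf P mu r0 C t + ln (Ef P mu (rr mu r0 t)))/2.
Definition q2f P mu r0 C t := (Sf P mu r0 C t - ln (Ef P mu (rr mu r0 t)))/2.
Definition p1f P mu r0 t := (P + uf mu (rr mu r0 t))/2.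
Definition p2f P mu r0 t := (P - uf mu (rr mu r0 t))/2.

Ltac sidec := repeat split; try exact I;
  first [ intro; nra | apply Rmult_lt_0_compat; [nra | apply Rinv_0_lt_compat; nra] | nra ].

Lemma pos_facts P mu r : 0 < mu -> Rabs P < mu -> 1 < r ->
  0 < mu*(r+1)+P*(r-1) /\ 0 < mu*(r+1)-P*(r-1) /\
  0 < mu*mu*(r+1)*(r+1) - P*P*(r-1)*(r-1) /\ 1 < Ef P mu r.
Proof.
  intros Hm HP Hr. apply Rabs_def2 in HP.
  assert (A : 0 < mu*(r+1)+P*(r-1)) by nra.
  assert (B : 0 < mu*(r+1)-P*(r-1)) by nra.
  assert (D : 0 < mu*mu*(r+1)*(r+1) - P*P*(r-1)*(r-1)) by nra.
  assert (M : 0 < mu*mu - P*P) by nra.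
  repeat split; auto.
  replace (Ef P mu r) with (1 + (mu*mu-P*P)*((r-1)*(r-1))/(4*mu*mu*r)).
  - assert (0 < (mu*mu-P*P)*((r-1)*(r-1))/(4*mu*mu*r)); [|lra].
    apply Rdiv_lt_0_compat; [apply Rmult_lt_0_compat; nra|nra].
  - unfold Ef. field. lra.
Qed.

Lemma d_q1 P mu r0 C t : 0 < mu -> Rabs P < mu -> 1 < rr mu r0 t ->
  is_derive (q1f P mu r0 C) t (p1f P mu r0 t + p2f P mu r0 t * exp(-(q1f P mu r0 C t - q2f P mu r0 C t))).
Proof.
  intros Hm HP Hr.
  destruct (pos_facts P mu _ Hm HP Hr) as [A [B [D E]]].
  assert (Hq : q1f P mu r0 C t - q2f P mu r0 C t = ln (Ef P mu (rr mu r0 t))).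
  { unfold q1f, q2f. field. }
  rewrite Hq, exp_Ropp, exp_ln by lra.
  unfold q1f, p1f, p2f, Sf, Lf, Ef, uf in *. unfold rr in *.
  set (e := exp (-(mu*t))) in *.
  assert (Hr0 : 0 < r0 * e) by lra.
  auto_derive; fold e.
  - sidec.
  - field. sidec.
Qed.

Lemma d_q2 P mu r0 C t : 0 < mu -> Rabs P < mu -> 1 < rr mu r0 t ->
  is_derive (q2f P mu r0 C) t (p2f P mu r0 t + p1f P mu r0 t * exp(-(q1f P mu r0 C t - q2f P mu r0 C t))).
Proof.
  intros Hm HP Hr.
  destruct (pos_facts P mu _ Hm HP Hr) as [A [B [D E]]].
  assert (Hq : q1f P mu r0 C t - q2f P mu r0 C t = ln (Ef P mu (rr mu r0 t))).
  { unfold q1f, q2f. field. }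
  rewrite Hq, exp_Ropp, exp_ln by lra.
  unfold q1f, q2f, p1f, p2f, Sf, Lf, Ef, uf in *. unfold rr in *.
  set (e := exp (-(mu*t))) in *.
  assert (Hr0 : 0 < r0 * e) by lra.
  auto_derive; fold e.
  - sidec.
  - field. sidec.
Qed.

Lemma d_p1 P mu r0 C t : 0 < mu -> Rabs P < mu -> 1 < rr mu r0 t ->
  is_derive (p1f P mu r0) t (p1f P mu r0 t * p2f P mu r0 t * exp(-(q1f P mu r0 C t - q2f P mu r0 C t))).
Proof.
  intros Hm HP Hr.
  destruct (pos_facts P mu _ Hm HP Hr) as [A [B [D E]]].
  assert (Hq : q1f P mu r0 C t - q2f P mu r0 C t = ln (Ef P mu (rr mu r0 t))).
  { unfold q1f, q2f. field. }
  rewrite Hq, exp_Ropp, exp_ln by lra.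
  unfold q1f, q2f, p1f, p2f, Sf, Lf, Ef, uf in *. unfold rr in *.
  set (e := exp (-(mu*t))) in *.
  assert (Hr0 : 0 < r0 * e) by lra.
  auto_derive; fold e.
  - sidec.
  - field. sidec.
Qed.

Lemma d_p2 P mu r0 C t : 0 < mu -> Rabs P < mu -> 1 < rr mu r0 t ->
  is_derive (p2f P mu r0) t (- (p1f P mu r0 t * p2f P mu r0 t * exp(-(q1f P mu r0 C t - q2f P mu r0 C t)))).
Proof.
  intros Hm HP Hr.
  destruct (pos_facts P mu _ Hm HP Hr) as [A [B [D E]]].
  assert (Hq : q1f P mu r0 C t - q2f P mu r0 C t = ln (Ef P mu (rr mu r0 t))).
  { unfold q1f, q2f. field. }
  rewrite Hq, exp_Ropp, exp_ln by lra.
  unfold q1f, q2f, p1f, p2f, Sf, Lf, Ef, uf in *. unfold rr in *.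
  set (e := exp (-(mu*t))) in *.
  assert (Hr0 : 0 < r0 * e) by lra.
  auto_derive; fold e.
  - sidec.
  - field. sidec.
Qed.

Lemma ln_pos x : 1 < x -> 0 < ln x.
Proof. intro. rewrite <- ln_1. apply ln_increasing; lra. Qed.

Lemma rr_gt1 mu r0 t : 0 < mu -> 1 < r0 -> t < ln r0 / mu -> 1 < rr mu r0 t.
Proof.
  intros Hm Hr Ht. unfold rr.
  assert (mu * t < ln r0).
  { apply Rmult_lt_reg_r with (/mu). apply Rinv_0_lt_compat; lra.
    replace (mu * t * / mu) with t by (field; lra). exact Ht. }
  assert (exp (- ln r0) < exp (-(mu*t))) by (apply exp_increasing; lra).
  rewrite exp_Ropp, exp_ln in H0 by lra.
  apply Rmult_lt_compat_l with (r := r0) in H0; [|lra].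
  rewrite Rinv_r in H0 by lra. exact H0.
Qed.

Lemma cont_at_right (f : R -> R) : ex_derive f 0 -> filterlim f (at_right 0) (locally (f 0)).
Proof.
  intro H. eapply filterlim_filter_le_1; [apply filter_le_within|].
  apply (@ex_derive_continuous R_AbsRing R_NormedModule). exact H.
Qed.

Lemma exist1 P mu r0 C : 0 < mu -> Rabs P < mu -> 1 < r0 ->
  is_solution (q1f P mu r0 C) (q2f P mu r0 C) (p1f P mu r0) (p2f P mu r0) (Finite (ln r0 / mu)).
Proof.
  intros Hm HP Hr.
  assert (HT : 0 < ln r0 / mu) by (apply Rdiv_lt_0_compat; [apply ln_pos|]; lra).
  assert (Hgt : forall t, t < ln r0 / mu -> q2f P mu r0 C t < q1f P mu r0 C t).
  { intros t Ht.
    destruct (pos_facts P mu _ Hm HP (rr_gt1 mu r0 t Hm Hr Ht)) as [_ [_ [_ E]]].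
    assert (Hq : q1f P mu r0 C t - q2f P mu r0 C t = ln (Ef P mu (rr mu r0 t))).
    { unfold q1f, q2f. field. }
    assert (0 < ln (Ef P mu (rr mu r0 t))) by (apply ln_pos; lra). lra. }
  assert (H0 : 1 < rr mu r0 0) by (apply rr_gt1; lra).
  split; [|split; [|split; [|split; [|split]]]].
  - intros t Ht HtT. simpl in HtT.
    assert (Hr1 := rr_gt1 mu r0 t Hm Hr HtT).
    specialize (Hgt t HtT).
    rewrite DH_p1, DH_p2, DH_q1, DH_q2, Ropp_involutive, Rabs_pos_eq by lra.
    refine (conj _ (conj _ (conj _ _))).
    + apply d_q1; auto.
    + apply d_q2; auto.
    + apply (d_p1 P mu r0 C); auto.
    + apply (d_p2 P mu r0 C); auto.
  - apply cont_at_right. eexists. apply (d_q1 P mu r0 C 0); auto.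
  - apply cont_at_right. eexists. apply (d_q2 P mu r0 C 0); auto.
  - apply cont_at_right. eexists. apply (d_p1 P mu r0 C 0); auto.
  - apply cont_at_right. eexists. apply (d_p2 P mu r0 C 0); auto.
  - intros t Ht0 HtT. apply Hgt. exact HtT.
Qed.

#[local] Hint Extern 1 (Filter _) => (exact _) : core.

Ltac limt := repeat (first [exact _ | assumption | apply filterlim_const | apply lim_plus | apply lim_mult]).

Ltac etaD := repeat match goal with |- context [Derive (fun x => ?f x) ?y] =>
  change (Derive (fun x => f x) y) with (Derive f y) end.

Lemma sol_inv q1 q2 p1 p2 T a1 a2 b1 b2 :
 is_solution q1 q2 p1 p2 T -> has_init q1 q2 p1 p2 a1 a2 b1 b2 -> a2 < a1 ->
 2 * Ham a1 a2 b1 b2 = 1 ->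
 forall t, 0 <= t -> Rbar_lt t T ->
 p1 t + p2 t = b1 + b2 /\
 p1 t * p1 t + p2 t * p2 t + 2 * p1 t * p2 t * exp(-(q1 t - q2 t)) = 1.
Proof.
  intros Hs [I1 [I2 [I3 I4]]] Ha HH t Ht HtT.
  pose proof Hs as [_ [L1 [L2 [L3 [L4 _]]]]].
  split.
  - rewrite <- I3, <- I4.
    apply (const (fun t => p1 t + p2 t) T); auto.
    + intros s Hs0 HsT. destruct (sol_der _ _ _ _ _ Hs s Hs0 HsT) as [A [B [C D]]].
      auto_derive.
      * repeat split; eexists; eauto.
      * etaD; rewrite (is_derive_unique _ _ _ C), (is_derive_unique _ _ _ D). ring.
    + apply lim_plus; auto.
  - rewrite <- HH, Ham_simpl, Rabs_pos_eq by lra.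
    rewrite <- I1, <- I2, <- I3, <- I4.
    replace (2 * (/ 2 * (p1 0 * p1 0 + 2 * p1 0 * p2 0 * exp (- (q1 0 - q2 0)) + p2 0 * p2 0)))
      with (p1 0 * p1 0 + p2 0 * p2 0 + 2 * p1 0 * p2 0 * exp(-(q1 0 - q2 0))) by field.
    apply (const (fun t => p1 t * p1 t + p2 t * p2 t + 2 * p1 t * p2 t * exp(-(q1 t - q2 t))) T); auto.
    + intros s Hs0 HsT. destruct (sol_der _ _ _ _ _ Hs s Hs0 HsT) as [A [B [C D]]].
      auto_derive.
      * repeat split; eexists; eauto.
      * etaD; rewrite (is_derive_unique _ _ _ A), (is_derive_unique _ _ _ B),
          (is_derive_unique _ _ _ C), (is_derive_unique _ _ _ D).
        unfold Rminus. ring.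
    + assert (Lq : filterlim (fun t => exp(-(q1 t - q2 t))) (at_right 0) (locally (exp(-(q1 0 - q2 0))))).
      { apply (lim_comp1 _ (fun t => q1 t - q2 t) (fun y => exp (- y))).
        - apply lim_plus; auto. apply (lim_comp1 _ q2 Ropp); auto. auto_derive; auto.
        - auto_derive; auto. }
      cbv beta. limt.
Qed.

Lemma alg1 p1 p2 X P mu : p1 + p2 = P ->
  p1 * p1 + p2 * p2 + 2 * p1 * p2 * X = 1 -> mu * mu = 2 - P * P -> P * P < 1 -> 0 < X < 1 ->
  4 * p1 * p2 * X = mu * mu - (p1 - p2) * (p1 - p2) /\
  mu * mu < (p1 - p2) * (p1 - p2) /\ p1 * p2 < 0.
Proof.
  intros HP HK Hmu HP1 HX.
  assert (E : 4 * p1 * p2 * X = mu * mu - (p1 - p2) * (p1 - p2)).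
  { rewrite Hmu, <- HP. nra. }
  assert (E2 : 4 * p1 * p2 = P * P - (p1 - p2) * (p1 - p2)) by (rewrite <- HP; ring).
  assert (mu * mu < (p1 - p2) * (p1 - p2)).
  { rewrite E2 in E. nra. }
  split; [auto|split; [auto|]]. nra.
Qed.

Lemma uniq1 q1 q2 p1 p2 a1 a2 b1 b2 P mu r0 :
  a2 < a1 -> 2 * Ham a1 a2 b1 b2 = 1 -> b1 - b2 < 0 ->
  P = b1 + b2 -> P * P < 1 -> 0 < mu -> mu * mu = 2 - P * P ->
  b1 - b2 + mu <> 0 -> r0 = (b1 - b2 - mu) / (b1 - b2 + mu) -> 1 < r0 ->
  is_solution q1 q2 p1 p2 (Finite (ln r0 / mu)) -> has_init q1 q2 p1 p2 a1 a2 b1 b2 ->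
  filterlim (fun t => q1 t - q2 t) (at_left (ln r0 / mu)) (locally 0).
Proof.
  intros Ha HH Hu0 HP HP1 Hm Hmu Hnz Hr0 Hr1 Hs Hi.
  set (T := ln r0 / mu).
  assert (HT : 0 < T) by (apply Rdiv_lt_0_compat; [apply ln_pos|]; lra).
  pose proof Hs as [_ [L1 [L2 [L3 [L4 Hlt]]]]].
  pose proof Hi as [I1 [I2 [I3 I4]]].
  assert (Halg : forall s, 0 <= s -> s < T ->
    4 * p1 s * p2 s * exp(-(q1 s - q2 s)) = mu * mu - (p1 s - p2 s) * (p1 s - p2 s) /\
    mu * mu < (p1 s - p2 s) * (p1 s - p2 s) /\ p1 s * p2 s < 0).
  { intros s Hs0 HsT.
    destruct (sol_inv _ _ _ _ _ _ _ _ _ Hs Hi Ha HH s Hs0 HsT) as [K1 K2].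
    apply alg1 with P; auto. congruence.
    specialize (Hlt s Hs0 HsT). split; [apply exp_pos|].
    rewrite <- exp_0. apply exp_increasing. lra. }
  assert (Hu : forall s, 0 <= s -> s < T -> p1 s - p2 s < - mu).
  { intros s Hs0 HsT.
    assert (p1 s - p2 s <= p1 0 - p2 0).
    { apply (mono (fun s => p1 s - p2 s) (Finite T)); auto.
      - intros x Hx HxT. destruct (sol_der _ _ _ _ _ Hs x Hx HxT) as [A [B [C D]]].
        exists (p1 x * p2 x * exp (- (q1 x - q2 x)) - - (p1 x * p2 x * exp (- (q1 x - q2 x)))).
        split. apply (is_derive_minus p1 p2); auto.
        destruct (Halg x) as [_ [_ Hn]]; try lra; auto.
        assert (0 < exp (- (q1 x - q2 x))) by apply exp_pos. nra.
      - apply lim_plus; auto. apply (lim_comp1 _ p2 Ropp); auto. auto_derive; auto. }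
    destruct (Halg s) as [_ [Hb _]]; auto. nra. }
  assert (Hrho : forall s, 0 <= s -> s < T ->
     (p1 s - p2 s - mu) / (p1 s - p2 s + mu) * exp (mu * s) = r0).
  { intros s Hs0 HsT.
    replace r0 with ((p1 0 - p2 0 - mu) / (p1 0 - p2 0 + mu) * exp (mu * 0)).
    2:{ rewrite Rmult_0_r, exp_0, Rmult_1_r, I3, I4. auto. }
    apply (const (fun s => (p1 s - p2 s - mu) / (p1 s - p2 s + mu) * exp (mu * s)) (Finite T)); auto.
    - intros x Hx HxT. destruct (sol_der _ _ _ _ _ Hs x Hx HxT) as [A [B [C D]]].
      assert (Hux := Hu x (Rlt_le _ _ Hx) HxT).
      destruct (Halg x) as [Hk _]; try lra; auto.
      auto_derive.
      + repeat split; try (eexists; eauto). intro; lra.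
      + etaD. rewrite (is_derive_unique _ _ _ C), (is_derive_unique _ _ _ D).
        replace (p1 x * p2 x * exp (- (q1 x - q2 x))) with ((mu * mu - (p1 x - p2 x) * (p1 x - p2 x))/4) by lra.
        field. lra.
    - cbv beta. apply (lim_mult (at_right 0)).
      + apply (lim_comp1 _ (fun s => p1 s - p2 s) (fun y => (y - mu) / (y + mu))).
        * apply lim_plus; auto. apply (lim_comp1 _ p2 Ropp); auto. auto_derive; auto.
        * auto_derive. rewrite I3, I4. lra.
      + apply (lim_comp1 _ (fun s => s) (fun y => exp (mu * y))).
        * eapply filterlim_filter_le_1; [apply filter_le_within|]. apply filterlim_id.
        * auto_derive; auto. }
  assert (Hq : forall s, 0 <= s -> s < T -> q1 s - q2 s = ln (Ef P mu (rr mu r0 s))).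
  { intros s Hs0 HsT.
    destruct (Halg s) as [Hk [Hb Hn]]; auto.
    assert (Hus := Hu s Hs0 HsT).
    assert (Hrr : rr mu r0 s = (p1 s - p2 s - mu) / (p1 s - p2 s + mu)).
    { unfold rr. rewrite <- (Hrho s Hs0 HsT). rewrite Rmult_assoc, <- exp_plus.
      replace (mu * s + - (mu * s)) with 0 by ring. rewrite exp_0. ring. }
    rewrite Hrr.
    set (u := p1 s - p2 s) in *.
    set (X := exp (- (q1 s - q2 s))) in *.
    assert (HX : 0 < X) by apply exp_pos.
    assert (HE : Ef P mu ((u - mu) / (u + mu)) = / X).
    { unfold Ef.
      assert (HPu : P = p1 s + p2 s).
      { destruct (sol_inv _ _ _ _ _ _ _ _ _ Hs Hi Ha HH s Hs0 HsT) as [K1 _]. lra. }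
      assert (Hx : X = (u*u - mu*mu) / (u*u - P*P)).
      { assert (4 * p1 s * p2 s = P * P - u * u) by (unfold u; rewrite HPu; ring).
        field_simplify_eq. 2: nra. nra. }
      rewrite Hx. field. repeat split; try lra; nra. }
    rewrite HE, ln_Rinv by auto. unfold X. rewrite ln_exp. ring. }
  assert (HrT : rr mu r0 T = 1).
  { unfold rr, T. replace (- (mu * (ln r0 / mu))) with (- ln r0) by (field; lra).
    rewrite exp_Ropp, exp_ln by lra. field. lra. }
  apply filterlim_ext_loc with (fun t => ln (Ef P mu (rr mu r0 t))).
  - exists (mkposreal T HT). intros y Hy HyT.
    change (Rabs (y - T) < T) in Hy. apply Rabs_def2 in Hy.
    rewrite Hq; auto; lra.
  - replace 0 with (ln (Ef P mu (rr mu r0 T))).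
    + eapply filterlim_filter_le_1; [apply filter_le_within|].
      apply (@ex_derive_continuous R_AbsRing R_NormedModule (fun t => ln (Ef P mu (rr mu r0 t))) T).
      unfold Ef, rr in *. auto_derive. rewrite HrT. sidec.
    + rewrite HrT. unfold Ef. replace ((mu * mu * (1 + 1) * (1 + 1) - P * P * (1 - 1) * (1 - 1)) / (4 * mu * mu * 1)) with 1 by (field; lra).
      apply ln_1.
Qed.

Definition q1g s w C t := (C + s*(t + ln(exp t + w)) + ln(1 + w*exp(-t)))/2.
Definition q2g s w C t := (C + s*(t + ln(exp t + w)) - ln(1 + w*exp(-t)))/2.
Definition p1g (s : R) (t : R) := (s-1)/2.
Definition p2g (s : R) (t : R) := (s+1)/2.

Lemma exist2 s w C : s * s = 1 -> 0 < w ->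
  is_solution (q1g s w C) (q2g s w C) (p1g s) (p2g s) p_infty.
Proof.
  intros Hs Hw.
  assert (Hgt : forall t, q2g s w C t < q1g s w C t).
  { intro t. unfold q1g, q2g.
    assert (0 < ln (1 + w * exp (-t))); [|lra].
    apply ln_pos. assert (0 < w * exp (-t)) by (apply Rmult_lt_0_compat; [lra|apply exp_pos]). lra. }
  assert (Hx : forall t, exp (-(q1g s w C t - q2g s w C t)) = / (1 + w * exp (-t))).
  { intro t. replace (q1g s w C t - q2g s w C t) with (ln (1 + w * exp (-t))) by (unfold q1g, q2g; field).
    rewrite exp_Ropp, exp_ln; auto.
    assert (0 < w * exp (-t)) by (apply Rmult_lt_0_compat; [lra|apply exp_pos]). lra. }
  assert (Hd1 : forall t, is_derive (q1g s w C) t (p1g s t + p2g s t * exp (-(q1g s w C t - q2g s w C t)))).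
  { intro t. rewrite Hx. unfold q1g, p1g, p2g.
    assert (E1 : 0 < exp t) by apply exp_pos. assert (E2 : 0 < exp (-t)) by apply exp_pos.
    assert (E3 : exp t * exp (-t) = 1) by (rewrite <- exp_plus; replace (t + - t) with 0 by ring; apply exp_0).
    auto_derive.
    - repeat split; try exact I; nra.
    - rewrite !exp_Ropp.
      assert (0 < w * / exp t) by (apply Rmult_lt_0_compat; [lra|apply Rinv_0_lt_compat; lra]).
      field; repeat split; lra. }
  assert (Hd2 : forall t, is_derive (q2g s w C) t (p2g s t + p1g s t * exp (-(q1g s w C t - q2g s w C t)))).
  { intro t. rewrite Hx. unfold q2g, p1g, p2g.
    assert (E1 : 0 < exp t) by apply exp_pos. assert (E2 : 0 < exp (-t)) by apply exp_pos.
    assert (E3 : exp t * exp (-t) = 1) by (rewrite <- exp_plus; replace (t + - t) with 0 by ring; apply exp_0).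
    auto_derive.
    - repeat split; try exact I; nra.
    - rewrite !exp_Ropp.
      assert (0 < w * / exp t) by (apply Rmult_lt_0_compat; [lra|apply Rinv_0_lt_compat; lra]).
      field; repeat split; lra. }
  assert (H12 : (s - 1) / 2 * ((s + 1) / 2) = 0).
  { replace ((s - 1) / 2 * ((s + 1) / 2)) with ((s * s - 1)/4) by field. rewrite Hs. field. }
  split; [|split; [|split; [|split; [|split]]]].
  - intros t Ht HtT.
    specialize (Hgt t).
    rewrite DH_p1, DH_p2, DH_q1, DH_q2, Ropp_involutive, Rabs_pos_eq by lra.
    refine (conj _ (conj _ (conj _ _))).
    + apply Hd1.
    + apply Hd2.
    + unfold p1g, p2g. rewrite H12, Rmult_0_l. auto_derive; auto; try ring.
    + unfold p1g, p2g. rewrite H12, Rmult_0_l, Ropp_0. auto_derive; auto; try ring.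
  - apply cont_at_right. eexists. apply Hd1.
  - apply cont_at_right. eexists. apply Hd2.
  - apply cont_at_right; unfold p1g; auto_derive; auto.
  - apply cont_at_right; unfold p2g; auto_derive; auto.
  - intros t _ _. apply Hgt.
Qed.

Lemma uniq2 q1 q2 p1 p2 a1 a2 b1 b2 :
  a2 < a1 -> 2 * Ham a1 a2 b1 b2 = 1 -> (b1 + b2) * (b1 + b2) = 1 -> b1 - b2 = -1 ->
  is_solution q1 q2 p1 p2 p_infty -> has_init q1 q2 p1 p2 a1 a2 b1 b2 ->
  filterlim (fun t => q1 t - q2 t) (Rbar_locally p_infty) (locally 0).
Proof.
  intros Ha HH HP Hu0 Hs Hi.
  pose proof Hs as [_ [L1 [L2 [L3 [L4 Hlt]]]]].
  pose proof Hi as [I1 [I2 [I3 I4]]].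
  assert (H0 : forall s, 0 <= s -> p1 s * p2 s = 0).
  { intros s Hs0.
    destruct (sol_inv _ _ _ _ _ _ _ _ _ Hs Hi Ha HH s Hs0 I) as [K1 K2].
    specialize (Hlt s Hs0 I).
    assert (HX : exp (- (q1 s - q2 s)) < 1).
    { rewrite <- exp_0. apply exp_increasing. lra. }
    set (X := exp (- (q1 s - q2 s))) in *.
    assert (E : (p1 s + p2 s) * (p1 s + p2 s) = 1) by (rewrite K1; auto).
    assert (E2 : 4 * (p1 s * p2 s) * (1 - X) = 0) by nra.
    assert (1 - X <> 0) by lra.
    apply Rmult_integral in E2. destruct E2 as [E2|E2]; [lra|contradiction]. }
  assert (Hu : forall s, 0 <= s -> p1 s - p2 s = -1).
  { intros s Hs0. rewrite <- Hu0, <- I3, <- I4.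
    apply (const (fun s => p1 s - p2 s) p_infty); auto.
    - intros x Hx _. destruct (sol_der _ _ _ _ _ Hs x Hx I) as [A [B [C D]]].
      rewrite (H0 x) in C, D by lra.
      replace 0 with (0 * exp (- (q1 x - q2 x)) - - (0 * exp (- (q1 x - q2 x)))) by ring.
      apply (is_derive_minus p1 p2); auto.
    - apply lim_plus; auto. apply (lim_comp1 _ p2 Ropp); auto. auto_derive; auto.
    - exact I. }
  set (w0 := exp (a1 - a2) - 1).
  assert (Hw0 : 0 < w0).
  { unfold w0. rewrite <- exp_0 at 1. assert (exp 0 < exp (a1 - a2)) by (apply exp_increasing; lra). lra. }
  assert (HW : forall s, 0 <= s -> (exp (q1 s - q2 s) - 1) * exp s = w0).
  { intros s Hs0. unfold w0. rewrite <- I1, <- I2.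
    replace (exp (q1 0 - q2 0) - 1) with ((exp (q1 0 - q2 0) - 1) * exp 0) by (rewrite exp_0; ring).
    apply (const (fun s => (exp (q1 s - q2 s) - 1) * exp s) p_infty); auto.
    - intros x Hx _. destruct (sol_der _ _ _ _ _ Hs x Hx I) as [A [B [C D]]].
      assert (Hux := Hu x (Rlt_le _ _ Hx)).
      auto_derive.
      + repeat split; eexists; eauto.
      + etaD. rewrite (is_derive_unique _ _ _ A), (is_derive_unique _ _ _ B).
        replace (p1 x) with (p2 x - 1) by lra.
        rewrite exp_Ropp. 
        assert (0 < exp (q1 x + - q2 x)) by apply exp_pos.
        unfold Rminus. field. lra.
    - cbv beta. apply (lim_mult (at_right 0)).
      + apply (lim_comp1 _ (fun s => q1 s - q2 s) (fun y => exp y - 1)).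
        * apply lim_plus; auto. apply (lim_comp1 _ q2 Ropp); auto. auto_derive; auto.
        * auto_derive; auto.
      + apply (lim_comp1 _ (fun s => s) (fun y => exp y)).
        * eapply filterlim_filter_le_1; [apply filter_le_within|]. apply filterlim_id.
        * auto_derive; auto.
    - exact I. }
  assert (Hq : forall s, 0 <= s -> q1 s - q2 s = ln (1 + w0 * exp (- s))).
  { intros s Hs0. specialize (HW s Hs0).
    assert (exp (q1 s - q2 s) = 1 + w0 * exp (- s)).
    { rewrite <- HW, exp_Ropp. assert (0 < exp s) by apply exp_pos. field. lra. }
    rewrite <- H, ln_exp. auto. }
  apply filterlim_ext_loc with (fun t => ln (1 + w0 * exp (- t))).
  - exists 0. intros y Hy. rewrite Hq; auto. lra.
  - replace 0 with (ln (1 + w0 * 0)) by (rewrite Rmult_0_r, Rplus_0_r; apply ln_1).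
    apply (lim_comp1 (Rbar_locally p_infty) (fun t => exp (- t)) (fun y => ln (1 + w0 * y))).
    + eapply filterlim_comp with (G := Rbar_locally m_infty).
      * intros P [M HM]. exists (- M). intros x Hx. apply HM. lra.
      * exact is_lim_exp_m.
    + auto_derive. lra.
Qed.

Lemma init_K a1 a2 b1 b2 : a2 < a1 -> 2 * Ham a1 a2 b1 b2 = 1 ->
  b1 * b1 + b2 * b2 + 2 * b1 * b2 * exp (- (a1 - a2)) = 1 /\ 0 < exp (- (a1 - a2)) < 1.
Proof.
  intros Ha HH. rewrite Ham_simpl, Rabs_pos_eq in HH by lra. split.
  - rewrite <- HH. field.
  - split; [apply exp_pos|]. rewrite <- exp_0. apply exp_increasing. lra.
Qed.

Theorem lemma3 :
  (forall a1 a2 b1 b2 : R,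
     a2 < a1 -> 2 * Ham a1 a2 b1 b2 = 1 ->
     Rabs (b1 + b2) < 1 -> b1 - b2 < 0 ->
     exists T : R, 0 < T /\
       (exists q1 q2 p1 p2 : R -> R,
          is_solution q1 q2 p1 p2 (Finite T) /\ has_init q1 q2 p1 p2 a1 a2 b1 b2) /\
       (forall q1 q2 p1 p2 : R -> R,
          is_solution q1 q2 p1 p2 (Finite T) -> has_init q1 q2 p1 p2 a1 a2 b1 b2 ->
          filterlim (fun t => q1 t - q2 t) (at_left T) (locally 0))) /\
  (forall a1 a2 b1 b2 : R,
     a2 < a1 -> 2 * Ham a1 a2 b1 b2 = 1 ->
     Rabs (b1 + b2) = 1 -> b1 - b2 < 0 ->
       (exists q1 q2 p1 p2 : R -> R,
          is_solution q1 q2 p1 p2 p_infty /\ has_init q1 q2 p1 p2 a1 a2 b1 b2) /\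
       (forall q1 q2 p1 p2 : R -> R,
          is_solution q1 q2 p1 p2 p_infty -> has_init q1 q2 p1 p2 a1 a2 b1 b2 ->
          filterlim (fun t => q1 t - q2 t) (Rbar_locally p_infty) (locally 0))).
Proof.
  split.
  - intros a1 a2 b1 b2 Ha HH HP Hu.
    destruct (init_K a1 a2 b1 b2 Ha HH) as [K0 HX0].
    set (P := b1 + b2).
    assert (HP2 : P * P < 1) by (apply Rabs_def2 in HP; unfold P; nra).
    set (mu := sqrt (2 - P * P)).
    assert (Hmu : mu * mu = 2 - P * P) by (apply sqrt_sqrt; lra).
    assert (Hm0 : 0 <= mu) by apply sqrt_pos.
    assert (Hm1 : 1 < mu) by nra.
    destruct (alg1 b1 b2 (exp (- (a1 - a2))) P mu) as [A1 [A2 A3]]; auto.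
    assert (Hum : b1 - b2 < - mu) by nra.
    set (r0 := (b1 - b2 - mu) / (b1 - b2 + mu)).
    assert (Hr1 : 1 < r0).
    { unfold r0. apply Rmult_lt_reg_r with (- (b1 - b2 + mu)). lra.
      replace ((b1 - b2 - mu) / (b1 - b2 + mu) * - (b1 - b2 + mu)) with (- (b1 - b2 - mu)) by (field; lra).
      lra. }
    exists (ln r0 / mu). split; [apply Rdiv_lt_0_compat; [apply ln_pos|]; lra|].
    split.
    + assert (HPm : Rabs P < mu) by (unfold P; lra).
      exists (q1f P mu r0 (a1 + a2 + Lf P mu r0)), (q2f P mu r0 (a1 + a2 + Lf P mu r0)),
        (p1f P mu r0), (p2f P mu r0).
      split; [apply exist1; auto; lra|].
      assert (Hrr : rr mu r0 0 = r0) by (unfold rr; rewrite Rmult_0_r, Ropp_0, exp_0; ring).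
      assert (HE : Ef P mu r0 = exp (a1 - a2)).
      { set (X := exp (- (a1 - a2))) in *.
        replace (exp (a1 - a2)) with (/ X) by (unfold X; rewrite exp_Ropp, Rinv_inv; auto).
        assert (Hx : X = ((b1 - b2)*(b1 - b2) - mu*mu) / ((b1 - b2)*(b1 - b2) - P*P)).
        { assert (4 * b1 * b2 = P * P - (b1 - b2) * (b1 - b2)) by (unfold P; ring).
          field_simplify_eq. 2: nra. nra. }
        unfold Ef, r0. rewrite Hx. field. repeat split; try lra; nra. }
      assert (HU : uf mu r0 = b1 - b2).
      { unfold uf, r0. field. repeat split; lra. }
      unfold has_init, q1f, q2f, p1f, p2f, Sf. rewrite !Hrr, HE, HU, ln_exp.
      unfold P. repeat split; field.
    + intros q1 q2 p1 p2 Hs Hi.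
      apply (uniq1 q1 q2 p1 p2 a1 a2 b1 b2 P mu r0); auto; lra.
  - intros a1 a2 b1 b2 Ha HH HP Hu.
    destruct (init_K a1 a2 b1 b2 Ha HH) as [K0 HX0].
    assert (HP2 : (b1 + b2) * (b1 + b2) = 1).
    { destruct (Rcase_abs (b1 + b2)); [rewrite Rabs_left in HP|rewrite Rabs_right in HP]; auto; nra. }
    assert (Hb : b1 * b2 = 0).
    { set (X := exp (- (a1 - a2))) in *.
      assert (E2 : 4 * (b1 * b2) * (1 - X) = 0) by nra.
      apply Rmult_integral in E2. destruct E2 as [E2|E2]; lra. }
    assert (Hu1 : b1 - b2 = -1) by nra.
    split.
    + set (s := b1 + b2). set (w := exp (a1 - a2) - 1).
      assert (Hw : 0 < w).
      { unfold w. rewrite <- exp_0 at 1. assert (exp 0 < exp (a1 - a2)) by (apply exp_increasing; lra). lra. }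
      exists (q1g s w (a1 + a2 - s * (a1 - a2))), (q2g s w (a1 + a2 - s * (a1 - a2))), (p1g s), (p2g s).
      split; [apply exist2; auto|].
      assert (H1 : exp 0 + w = exp (a1 - a2)) by (unfold w; rewrite exp_0; ring).
      assert (H2 : 1 + w * exp (- 0) = exp (a1 - a2)) by (unfold w; rewrite Ropp_0, exp_0; ring).
      unfold has_init, q1g, q2g, p1g, p2g. rewrite H1, H2, ln_exp.
      unfold s. repeat split; try field; lra.
    + intros q1 q2 p1 p2 Hs Hi. apply (uniq2 q1 q2 p1 p2 a1 a2 b1 b2); auto.
Qed.
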